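(* Fix $K>0$ and $z\in\mathbb{C}$, and assume $b_n\ge m\ge m_0$ for a sufficiently large constant $m_0$. For all sufficiently large $n$ (depending on $K$) the following holds on the event $\mathcal{E}_K$: for every unit vector $v\in\mathbb{C}^n$ that is orthogonal to $\mathcal{H}_1$, and for every $i\in[m-1]$, either $\|v_{[i]}\|\ge b_n^{-10m}m^{-1/2}$ or $\|v_{[i+1]}\|\ge b_n^{-10m}m^{-1/2}$.
   Context: Let $b_n$ divide $n$, $m=n/b_n$, $c_n=3b_n$. Let $\tilde D_i,\tilde U_i,\tilde T_i$ ($i\in[m]$) be $b_n\times b_n$ matrices, $D_i=\tilde D_i/\sqrt{c_n}$, $U_i=\tilde U_i/\sqrt{c_n}$, $T_i=\tilde T_i/\sqrt{c_n}$, $(D_i)_z=D_i-zI_{b_n}$. Let $X$ be the $n\times n$ block matrix ($m\times m$ blocks of size $b_n$, block indices modulo $m$) with $(i,i)$ block $D_i$, $(i,i-1)$ block $T_{i-1}$, $(i,i+1)$ block $U_{i+1}$, other blocks zero, and $X_z=X-zI$. $\mathcal{H}_1$ is the span of all rows of $X_z$ except the first. $\mathcal{E}_K$ is the event that for all $i\in[m]$: $\|U_i\|,\|(D_i)_z\|,\|T_i\|\le K$ and the smallest singular values satisfy $s_{b_n}(U_i),s_{b_n}(T_i)\ge b_n^{-5}$. For $v\in\mathbb{C}^n$, $v_{[1]},\dots,v_{[m]}\in\mathbb{C}^{b_n}$ are the consecutive blocks of $b_n$ coordinates of $v$. *)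

(* Defs.v *)
From HB Require Import structures.
From mathcomp Require Import all_boot all_order all_algebra.
From mathcomp Require Import all_classical all_reals.
From mathcomp.real_closed Require Import complex.
Set Implicit Arguments. Unset Strict Implicit. Unset Printing Implicit Defensive.
Import Order.TTheory GRing.Theory Num.Theory.
Local Open Scope ring_scope.

Section Defs.
Variable R : realType.
Local Notation C := R[i].

Definition vnorm p q (x : 'M[C]_(p, q)) : R :=
  Num.sqrt (\sum_(i < p) \sum_(j < q) ((complex.Re (x i j)) ^+ 2 + (complex.Im (x i j)) ^+ 2)).

Definition cdot p (x y : 'rV[C]_p) : C := \sum_(j < p) x 0 j * (y 0 j)^*%C.

(* ||A|| <= K for the operator (spectral) norm: sup_{x<>0} |Ax|/|x| <= K. *)
Definition opnorm_le p (A : 'M[C]_p) (K : R) : Prop :=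
  forall x : 'cV[C]_p, vnorm (A *m x) <= K * vnorm x.

(* s_p(A) >= e for the smallest singular value of a square matrix,
   s_p(A) = min_{|x|=1} |Ax|. *)
Definition smin_ge p (A : 'M[C]_p) (e : R) : Prop :=
  forall x : 'cV[C]_p, e * vnorm x <= vnorm (A *m x).

(* Normalisation: D_i = Dt_i / sqrt(c_n), c_n = 3 b_n. *)
Definition scaleb (b : nat) (A : 'M[C]_b) : 'M[C]_b :=
  (real_complex R (Num.sqrt (3 * b)%:R)^-1) *: A.

(* The n x n block matrix X (n = sum over m blocks of size b), blocks indexed
   by 'I_m modulo m: block (i,i) = D_i, (i,i-1) = T_{i-1}, (i,i+1) = U_{i+1}. *)
Definition blockX (b m : nat) (D U T : 'I_m -> 'M[C]_b)
  : 'M[C]_(\sum_(i < m) b) :=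
  \mxblock_(i < m, j < m)
     ((if j == i then D i else 0)
      + (if j == ord_pred i then T j else 0)
      + (if j == ordS i then U j else 0) : 'M[C]_b).

Definition blockXz (b m : nat) (D U T : 'I_m -> 'M[C]_b) (z : C)
  : 'M[C]_(\sum_(i < m) b) := blockX D U T - z%:M.

Definition H1 p (A : 'M[C]_p) : 'rV[C]_p -> Prop :=
  fun h => exists c : 'I_p -> C,
    (forall k : 'I_p, (k : nat) = 0%N -> c k = 0) /\
    h = \sum_(k < p) c k *: row k A.

Definition vblock (b m : nat) (v : 'rV[C]_(\sum_(i < m) b)) (i : 'I_m)
  : 'rV[C]_b := submxrow v i.

Definition eventEK (b m : nat) (D U T : 'I_m -> 'M[C]_b) (z : C) (K : R)
  : Prop :=
  forall i : 'I_m,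
    [/\ opnorm_le (U i) K, opnorm_le (D i - z%:M) K, opnorm_le (T i) K,
        smin_ge (U i) ((b%:R : R) ^- 5) & smin_ge (T i) ((b%:R : R) ^- 5)].

End Defs.

(* Main.v *)
Require Import Defs.
From HB Require Import structures.
From mathcomp Require Import all_boot all_order all_algebra.
From mathcomp Require Import all_classical all_reals.
From mathcomp.real_closed Require Import complex.
From mathcomp Require Import ring lra zify.
Set Implicit Arguments. Unset Strict Implicit. Unset Printing Implicit Defensive.
Import Order.TTheory GRing.Theory Num.Theory.
Local Open Scope ring_scope.

Section Aux.
Variable R : realType.
Local Notation C := R[i].

Definition ns p q (x : 'M[C]_(p, q)) : R :=
  \sum_(i < p) \sum_(j < q) ((complex.Re (x i j)) ^+ 2 + (complex.Im (x i j)) ^+ 2).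

Lemma ns_ge0 p q (x : 'M[C]_(p, q)) : 0 <= ns x.
Proof.
apply: sumr_ge0 => i _; apply: sumr_ge0 => j _.
by apply: addr_ge0; apply: sqr_ge0.
Qed.

Lemma vnormE p q (x : 'M[C]_(p, q)) : vnorm x = Num.sqrt (ns x).
Proof. by []. Qed.

Lemma vnorm_sq p q (x : 'M[C]_(p, q)) : vnorm x ^+ 2 = ns x.
Proof. by rewrite vnormE sqr_sqrtr // ns_ge0. Qed.

Lemma vnorm_ge0 p q (x : 'M[C]_(p, q)) : 0 <= vnorm x.
Proof. exact: sqrtr_ge0. Qed.

Lemma ReD (x y : C) : complex.Re (x + y) = complex.Re x + complex.Re y.
Proof. by case: x => a b; case: y => c d. Qed.
Lemma ImD (x y : C) : complex.Im (x + y) = complex.Im x + complex.Im y.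
Proof. by case: x => a b; case: y => c d. Qed.
Lemma ReN (x : C) : complex.Re (- x) = - complex.Re x.
Proof. by case: x => a b. Qed.
Lemma ImN (x : C) : complex.Im (- x) = - complex.Im x.
Proof. by case: x => a b. Qed.

Lemma nsD p q (x y : 'M[C]_(p, q)) : ns (x + y) <= 2 * ns x + 2 * ns y.
Proof.
rewrite /ns !mulr_sumr -big_split /=; apply: ler_sum => i _.
rewrite !mulr_sumr -big_split /=; apply: ler_sum => j _.
rewrite !mxE ReD ImD.
set a := complex.Re (x i j); set b := complex.Re (y i j).
set c := complex.Im (x i j); set d := complex.Im (y i j).
have h1 := sqr_ge0 (a - b); have h2 := sqr_ge0 (c - d).
rewrite !expr2 in h1 h2 *; nra.
Qed.

Lemma nsN p q (x : 'M[C]_(p, q)) : ns (- x) = ns x.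
Proof.
rewrite /ns; apply: eq_bigr => i _; apply: eq_bigr => j _.
by rewrite !mxE ReN ImN !sqrrN.
Qed.

Lemma opnorm_ns p (A : 'M[C]_p) K (x : 'cV[C]_p) :
  opnorm_le A K -> 0 <= K -> ns (A *m x) <= K ^+ 2 * ns x.
Proof.
move=> /(_ x) h K0.
by rewrite -!vnorm_sq -exprMn ler_pXn2r // ?nnegrE ?vnorm_ge0 ?mulr_ge0 ?vnorm_ge0.
Qed.

Lemma smin_ns p (A : 'M[C]_p) e (x : 'cV[C]_p) :
  smin_ge A e -> 0 <= e -> e ^+ 2 * ns x <= ns (A *m x).
Proof.
move=> /(_ x) h e0.
by rewrite -!vnorm_sq -exprMn ler_pXn2r // ?nnegrE ?vnorm_ge0 ?mulr_ge0 ?vnorm_ge0.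
Qed.


Variables (b m : nat) (D U T : 'I_m -> 'M[C]_b) (z : C).
Variable v : 'rV[C]_(\sum_(i < m) b).

Definition Wc : 'cV[C]_(\sum_(i < m) b) := \col_j (v 0 j)^*%C.
Definition wb (k : 'I_m) : 'cV[C]_b := submxcol Wc k.

Hypothesis Horth : forall h, H1 (blockXz D U T z) h -> cdot h v = 0.

Lemma XW0 (g : 'I_(\sum_(i < m) b)) : (g : nat) <> 0%N ->
  (blockXz D U T z *m Wc) g 0 = 0.
Proof.
move=> g0; rewrite mxE.
have -> : \sum_j blockXz D U T z g j * Wc j 0 = cdot (row g (blockXz D U T z)) v.
  by rewrite /cdot; apply: eq_bigr => j _; rewrite !mxE.
apply: Horth; exists (fun k => if k == g then 1 else 0); split.
  by move=> k k0; case: eqP => // kg; case: g0; rewrite -kg.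
rewrite (bigD1 g) //= eqxx scale1r [X in _ = _ + X]big1 ?addr0 // => k /negbTE ->.
by rewrite scale0r.
Qed.

Lemma subXW0 (k : 'I_m) : (0 < k)%N ->
  submxcol (blockXz D U T z *m Wc) k = 0.
Proof.
move=> k0; apply/matrixP => r c; rewrite !mxE (ord1 c).
have := @XW0 (tagnat.Rank k r); rewrite mxE; apply.
rewrite tagnat.RankEsum.
have m0 : (0 < m)%N by apply: leq_trans k0 (ltnW (ltn_ord k)).
have b0 : (0 < b)%N := leq_ltn_trans (leq0n r) (ltn_ord r).
rewrite (bigD1 (Ordinal m0)) //=; lia.
Qed.

Lemma sum_if (F : 'I_m -> 'M[C]_b) (a : 'I_m) :
  \sum_j ((if j == a then F j else 0) *m wb j) = F a *m wb a.
Proof.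
rewrite (bigD1 a) //= eqxx big1 ?addr0 // => j /negbTE ->.
by rewrite mul0mx.
Qed.

Lemma block_eq (k : 'I_m) : (0 < k)%N ->
  (D k - z%:M) *m wb k + T (ord_pred k) *m wb (ord_pred k)
  + U (ordS k) *m wb (ordS k) = 0.
Proof.
move=> k0; have := subXW0 k0.
rewrite /blockXz mulmxBl mul_scalar_mx submxcolB.
rewrite -[X in blockX _ _ _ *m X](submxcolK Wc) /blockX mul_mxblock_mxrow mxcolK.
under eq_bigr do rewrite !mulmxDl.
rewrite !big_split /= !sum_if.
have -> : submxcol (z *: Wc) k = z *: wb k.
  by apply/matrixP => r c; rewrite !mxE.
move=> h; rewrite -h mulmxBl mul_scalar_mx; rewrite /wb.
set a := _ *m _; set c := _ *m _; set d := _ *m _.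
rewrite (addrAC a); exact: addrAC.
Qed.

Lemma sum_blocks (F : 'I_(\sum_(i < m) b) -> R) :
  \sum_g F g = \sum_k \sum_r F (tagnat.Rank k r).
Proof.
rewrite sig_big_dep /= (reindex _ tagnat.sig_bij_on) /=.
apply: eq_bigr => g _.
by rewrite -tagnat.rankE tagnat.sigK.
Qed.

Lemma ReC (x : C) : complex.Re (x^*%C) = complex.Re x.
Proof. by case: x. Qed.
Lemma ImC (x : C) : complex.Im (x^*%C) = - complex.Im x.
Proof. by case: x. Qed.

Lemma ns_wb k : ns (wb k) = ns (vblock v k).
Proof.
rewrite /ns big_ord1 /=; apply: eq_bigr => r _; rewrite big_ord1 !mxE.
by rewrite ReC ImC sqrrN.
Qed.

Lemma ns_v : ns v = \sum_k ns (wb k).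
Proof.
rewrite /ns big_ord1 sum_blocks; apply: eq_bigr => k _.
apply: eq_bigr => r _; rewrite big_ord1 !mxE.
by rewrite ReC ImC sqrrN.
Qed.

Lemma steps (K e : R) (k : 'I_m) : (0 < k)%N -> 0 <= K ->
  (forall j, [/\ opnorm_le (U j) K, opnorm_le (D j - z%:M) K, opnorm_le (T j) K,
        smin_ge (U j) e & smin_ge (T j) e]) -> 0 <= e ->
  e ^+ 2 * ns (wb (ordS k)) <= 2 * K ^+ 2 * (ns (wb (ord_pred k)) + ns (wb k)) /\
  e ^+ 2 * ns (wb (ord_pred k)) <= 2 * K ^+ 2 * (ns (wb (ordS k)) + ns (wb k)).
Proof.
move=> k0 K0 hE e0; have E0 := block_eq k0.
have [_ hD _ _ _] := hE k.
have [hU _ _ hUs _] := hE (ordS k).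
have [_ _ hT _ hTs] := hE (ord_pred k).
set a := (D k - z%:M) *m wb k in E0.
set c := T (ord_pred k) *m wb (ord_pred k) in E0.
set d := U (ordS k) *m wb (ordS k) in E0.
have ha : ns a <= K ^+ 2 * ns (wb k) by apply: opnorm_ns.
have hc : ns c <= K ^+ 2 * ns (wb (ord_pred k)) by apply: opnorm_ns.
split.
  have dE : d = - (c + a).
    apply/eqP; rewrite -addr_eq0; apply/eqP; rewrite -E0.
    by rewrite [LHS]addrC [c + a]addrC.
  apply: le_trans (smin_ns _ hUs e0) _; rewrite -/d dE nsN.
  apply: le_trans (nsD _ _) _; nra.
have hd : ns d <= K ^+ 2 * ns (wb (ordS k)) by apply: opnorm_ns.
have cE : c = - (d + a).
  apply/eqP; rewrite -addr_eq0; apply/eqP; rewrite -E0.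
  by rewrite [LHS]addrCA [LHS]addrC [c + a]addrC.
apply: le_trans (smin_ns _ hTs e0) _; rewrite -/c cE nsN.
apply: le_trans (nsD _ _) _; nra.
Qed.
End Aux.
Lemma seq_bound (R : realFieldType) (s : nat -> R) (m i : nat) (c eps : R) :
  0 <= c ->
  (forall k, (0 < k)%N -> (k.+1 < m)%N -> s k.+1 <= c * (s k.-1 + s k)) ->
  (forall k, (0 < k)%N -> (k.+1 < m)%N -> s k.-1 <= c * (s k.+1 + s k)) ->
  (i.+1 < m)%N -> s i <= eps -> s i.+1 <= eps -> 0 <= eps ->
  forall k, (k < m)%N -> s k <= (2 * c + 1) ^+ m * eps.
Proof.
move=> c0 hf hb im si si1 e0.
set M := 2 * c + 1.
have M1 : 1 <= M by rewrite /M; lra.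
have M0 : 0 <= M by lra.
have X0 t : 0 <= M ^+ t * eps by apply: mulr_ge0 => //; apply: exprn_ge0.
have hMX t : M ^+ t * eps <= M ^+ t.+1 * eps.
  by rewrite exprS -mulrA ler_peMl.
have step t x y : x <= M ^+ t * eps -> y <= M ^+ t * eps ->
    c * (x + y) <= M ^+ t.+1 * eps.
  move=> hx hy; have := X0 t; rewrite exprS -mulrA.
  set X := M ^+ t * eps in hx hy * => hX.
  have : c * (x + y) <= c * (2 * X) by apply: ler_wpM2l => //; lra.
  move=> /le_trans; apply.
  have -> : M * X = c * (2 * X) + X by rewrite /M; ring.
  lra.
have fw : forall t, (i + t + 1 < m)%N ->
    s (i + t)%N <= M ^+ t * eps /\ s (i + t + 1)%N <= M ^+ t * eps.
  elim=> [|t IH] h.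
    by rewrite addn0 addn1 expr0 mul1r.
  have [h1 h2] : s (i + t)%N <= M ^+ t * eps /\ s (i + t + 1)%N <= M ^+ t * eps.
    by apply: IH; lia.
  split.
    have -> : (i + t.+1 = i + t + 1)%N by lia.
    exact: le_trans h2 (hMX t).
  have -> : (i + t.+1 + 1 = (i + t + 1).+1)%N by lia.
  apply: le_trans (hf _ _ _) _; try lia.
  have -> : ((i + t + 1).-1 = i + t)%N by lia.
  exact: step.
have bw : forall t, (t <= i)%N ->
    s (i - t)%N <= M ^+ t * eps /\ s (i - t + 1)%N <= M ^+ t * eps.
  elim=> [|t IH] h.
    by rewrite subn0 addn1 expr0 mul1r.
  have [h1 h2] : s (i - t)%N <= M ^+ t * eps /\ s (i - t + 1)%N <= M ^+ t * eps.
    by apply: IH; lia.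
  split; last first.
    have -> : (i - t.+1 + 1 = i - t)%N by lia.
    exact: le_trans h1 (hMX t).
  have -> : (i - t.+1 = (i - t).-1)%N by lia.
  apply: le_trans (hb _ _ _) _; try lia.
  have -> : ((i - t).+1 = i - t + 1)%N by lia.
  exact: step.
move=> k km.
case: (leqP k i) => hk.
  have [h1 _] := bw (i - k)%N (leq_subr _ _).
  have -> : k = (i - (i - k))%N by lia.
  apply: le_trans h1 _; apply: ler_wpM2r => //; apply: ler_weXn2l => //; lia.
have [_ h2] := fw (k - i - 1)%N ltac:(lia).
have -> : k = (i + (k - i - 1) + 1)%N by lia.
apply: le_trans h2 _; apply: ler_wpM2r => //; apply: ler_weXn2l => //; lia.
Qed.

Lemma final_arith (R : rcfType) (K B : R) (m : nat) :
  0 < K -> 1 <= B -> 4 * K ^+ 2 + 1 < B * B -> (0 < m)%N ->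
  1 <= ((2 * (2 * K ^+ 2 * B ^+ 10) + 1) ^+ m *
        (B ^- (10 * m) * (Num.sqrt (m%:R : R))^-1) ^+ 2) *+ m -> False.
Proof.
move=> K0 B1 hBB m0.
set M := 2 * (2 * K ^+ 2 * B ^+ 10) + 1.
have B0 : 0 < B by lra.
have mR : 0 < (m%:R : R) by rewrite ltr0n.
have Y0 : 0 < B ^+ (20 * m) by apply: exprn_gt0.
have e2 : (B ^- (10 * m) * (Num.sqrt (m%:R : R))^-1) ^+ 2 = (B ^+ (20 * m))^-1 / m%:R.
  rewrite exprMn !exprVn sqr_sqrtr ?ler0n // -exprM.
  by rewrite (_ : (10 * m * 2 = 20 * m)%N) //; lia.
have eqS : (M ^+ m * (B ^- (10 * m) * (Num.sqrt (m%:R : R))^-1) ^+ 2) *+ m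
    = M ^+ m / B ^+ (20 * m).
  rewrite e2 -mulr_natl mulrCA [X in _ * X]mulrCA divff ?mulr1 //; lra.
rewrite eqS ler_pdivlMr // mul1r => S.
have B8 : 1 <= B ^+ 8 by apply: exprn_ege1.
have B10 : B * B <= B ^+ 10.
  rewrite (_ : 10%N = (2 + 8)%N) // exprD expr2 ler_peMr //; nra.
have Mlt : M < B ^+ 20.
  rewrite /M (_ : 20%N = (10 + 10)%N) // exprD.
  set Y := B ^+ 10 in B10 *.
  have hY : 4 * K ^+ 2 + 1 < Y by lra.
  have K2 : 0 <= K ^+ 2 by apply: exprn_ge0; lra.
  nra.
have M0 : 0 <= M by rewrite /M; nra.
have := ltrXn2r m M0 Mlt; rewrite (_ : (m != 0%N) = true); last by lia.
have E : B ^+ (20 * m) = B ^+ 20 ^+ m by rewrite exprM.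
by rewrite E in S => h; have := lt_le_trans h S; rewrite ltxx.
Qed.

Theorem proposition2p6 (R : realType) :
  exists m0 : nat,
  forall (K : R) (z : R[i]), 0 < K ->
  exists N : nat,
  forall (b m : nat), (m0 <= m)%N -> (m <= b)%N -> (N <= b * m)%N ->
  forall Dt Ut Tt : 'I_m -> 'M[R[i]]_b,
  let D := fun i => scaleb (Dt i) in
  let U := fun i => scaleb (Ut i) in
  let T := fun i => scaleb (Tt i) in
  eventEK D U T z K ->
  forall v : 'rV[R[i]]_(\sum_(i < m) b),
    vnorm v = 1 ->
    (forall h, H1 (blockXz D U T z) h -> cdot h v = 0) ->
    forall i j : 'I_m, (j : nat) = i.+1 ->
      ((b%:R : R) ^- (10 * m) * (Num.sqrt (m%:R : R))^-1 <= vnorm (vblock v i))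
      \/
      ((b%:R : R) ^- (10 * m) * (Num.sqrt (m%:R : R))^-1 <= vnorm (vblock v j)).
Proof.
exists 1%N => K z K0.
have hN0 := @archi_boundP R (4 * K ^+ 2 + 1) ltac:(nra).
set N0 := Num.Def.archi_bound _ in hN0.
exists N0 => b m _ mb Nbm Dt Ut Tt D U T hE v hv Horth i j ji.
set e := _ * _.
case: (lerP e (vnorm (vblock v i))) => [h|hi]; first by left.
case: (lerP e (vnorm (vblock v j))) => [h|hj]; first by right.
exfalso.
have im : (i.+1 < m)%N by rewrite -ji ltn_ord.
have b1 : (1 <= b)%N by lia.
set B := (b%:R : R).
have B1 : 1 <= B by rewrite /B ler1n.
have B0 : 0 < B by lra.
pose sv (k : nat) : R := oapp (fun o => ns (wb v o)) 0 (insub k).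
have svE (o : 'I_m) : sv o = ns (wb v o) by rewrite /sv valK.
have sv0 k : 0 <= sv k.
  by rewrite /sv; case: insub => [o|] //=; apply: ns_ge0.
have conv (x X : R) : (B ^- 5) ^+ 2 * x <= X -> x <= B ^+ 10 * X.
  move=> h; have -> : x = B ^+ 10 * ((B ^- 5) ^+ 2 * x).
    rewrite -exprVn -exprM (_ : (5 * 2 = 10)%N) // mulrA -exprMn divff ?expr1n ?mul1r //; lra.
  by apply: ler_wpM2l => //; apply: exprn_ge0; lra.
set c := 2 * K ^+ 2 * B ^+ 10.
have c0 : 0 <= c by rewrite /c; apply: mulr_ge0; [nra | apply: exprn_ge0; lra].
have hE' : forall j0, [/\ opnorm_le (U j0) K, opnorm_le (D j0 - z%:M) K,
    opnorm_le (T j0) K, smin_ge (U j0) (B ^- 5) & smin_ge (T j0) (B ^- 5)].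
  exact: hE.
have rr (X : R) : B ^+ 10 * (2 * K ^+ 2 * X) = c * X by rewrite /c; ring.
have rec k : (0 < k)%N -> (k.+1 < m)%N ->
    sv k.+1 <= c * (sv k.-1 + sv k) /\ sv k.-1 <= c * (sv k.+1 + sv k).
  move=> k0 km.
  have km' : (k < m)%N by lia.
  have kp : (k.-1 < m)%N by lia.
  pose o := Ordinal km'.
  have hS : ordS o = Ordinal km.
    by apply: val_inj => /=; rewrite modn_small.
  have hP : ord_pred o = Ordinal kp.
    apply: val_inj => /=.
    have -> : (k + m).-1 = k.-1 + m by lia.
    by rewrite modnDr modn_small.
  have e0 : 0 <= B ^- 5 by rewrite invr_ge0; apply: exprn_ge0; lra.
  have [h1 h2] := steps Horth (k := o) k0 (ltW K0) hE' e0.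
  rewrite hS hP in h1 h2.
  have E1 : ns (wb v (Ordinal km)) = sv k.+1 := esym (svE _).
  have E2 : ns (wb v (Ordinal kp)) = sv k.-1 := esym (svE _).
  have E3 : ns (wb v o) = sv k := esym (svE _).
  rewrite E1 E2 E3 in h1 h2.
  split.
    by apply: le_trans (conv _ _ h1) _; rewrite rr.
  by apply: le_trans (conv _ _ h2) _; rewrite rr.
have e_ge0 : 0 <= e.
  by rewrite /e; apply: mulr_ge0; rewrite invr_ge0 ?sqrtr_ge0 // exprn_ge0 //; lra.
have le_e (k : 'I_m) : vnorm (vblock v k) < e -> sv k <= e ^+ 2.
  move=> /ltW h; rewrite svE ns_wb -vnorm_sq.
  by rewrite ler_pXn2r // nnegrE ?vnorm_ge0.
have hsi := le_e i hi.
have hsj : sv i.+1 <= e ^+ 2 by rewrite -ji; apply: le_e.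
have e2_ge0 : 0 <= e ^+ 2 by apply: exprn_ge0.
have bnd := seq_bound c0 (fun k h1 h2 => (rec k h1 h2).1)
  (fun k h1 h2 => (rec k h1 h2).2) im hsi hsj e2_ge0.
have one : \sum_(k < m) sv k = 1.
  have : vnorm v ^+ 2 = 1 by rewrite hv expr1n.
  by rewrite vnorm_sq ns_v => <-; apply: eq_bigr => k _; exact: svE.
have S : \sum_(k < m) sv k <= \sum_(k < m) ((2 * c + 1) ^+ m * e ^+ 2).
  by apply: ler_sum => k _; apply: bnd.
rewrite one sumr_const card_ord in S.
have m0 : (0 < m)%N := leq_ltn_trans (leq0n _) (ltn_ord i).
have hbb : (N0 <= b * b)%N := leq_trans Nbm (leq_mul (leqnn b) mb).
have hBB : N0%:R <= B * B by rewrite /B -natrM ler_nat.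
exact: (final_arith K0 B1 (lt_le_trans hN0 hBB) m0 S).
Qed.
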